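(* Let $\mathcal B$ be a set of bidders with valuations $\{v_b\}$ on $\Omega$ and let $r\ge 0$ be reserve prices. Let $\mathcal B'=\mathcal B\cup\{a\}$ where $a$ is an additional bidder with additive valuation $v_a(S)=r(S)$, and for an allocation $\langle\Omega_b\rangle_{b\in\mathcal B}$ let $\langle\Omega'_{b'}\rangle_{b'\in\mathcal B'}$ be given by $\Omega'_b=\Omega_b$ for $b\in\mathcal B$ and $\Omega'_a=\Omega\setminus\bigcup_{b\in\mathcal B}\Omega_b$. (a1) The allocation $\langle\Omega_b\rangle$ with prices $p$ is a Walrasian equilibrium with reserve prices $r$ for $\mathcal B$ if and only if $\langle\Omega'_{b'}\rangle$ with prices $p'$ is a Walrasian equilibrium for $\mathcal B'$, where $p_j=p'_j$ for $j\in\bigcup_{b\in\mathcal B}\Omega_b$ and $p_{j'}=r_{j'}$ for $j'\in\Omega\setminus\bigcup_{b\in\mathcal B}\Omega_b$. (a2) $\langle\Omega_b\rangle$ is a Walrasian-equilibrium-with-reserve-prices-$r$ allocation if and only if (the 0/1 vector $x_{b,S}=1$ iff $S=\Omega_b$) is an optimal integral solution to the linear program $\mathrm{LP}_r$. (b) If all $v_b$ are gross substitute, then (b1) a Walrasian equilibrium with reserve prices $r$ exists for $\{v_b\}$, and (b2) the set of price vectors of Walrasian equilibria with reserve prices $r$ forms a complete lattice (closed under item-wise $\min$ and $\max$).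
   Context: $\Omega$ is a finite set of items; price vectors $p\in\mathbb{R}^\Omega_{\ge0}$, $p(S)=\sum_{j\in S}p_j$, comparisons item-wise. Each bidder has a monotone valuation $v_b:2^\Omega\to\mathbb{R}$, $v_b(\emptyset)=0$; $D_b(p)$ is the set of $S$ maximizing $v_b(S)-p(S)$. An allocation is a family of pairwise disjoint subsets $\langle\Omega_b\rangle$ of $\Omega$ (items may be unallocated); it is envy free at $p$ if $\Omega_b\in D_b(p)$ for all $b$. A Walrasian equilibrium is an envy-free allocation with prices $p\ge0$ where unallocated items have price $0$. A Walrasian equilibrium with reserve prices $r$ is an envy-free allocation with prices $p\ge r$ where every unallocated item $j$ has $p_j=r_j$. A valuation is gross substitute if for all $p^{(2)}\ge p^{(1)}\ge0$ and every $D^{(1)}\in D(p^{(1)})$ there is $D^{(2)}\in D(p^{(2)})$ containing every $j\in D^{(1)}$ with $p^{(1)}_j=p^{(2)}_j$. $\mathrm{LP}_r$: maximize $\sum_{b\in\mathcal B,S\subseteq\Omega}x_{b,S}v_b(S)+\sum_{j\in\Omega}\big(1-\sum_{b,S\ni j}x_{b,S}\big)r_j$ subject to $\sum_{b,S\ni j}x_{b,S}\le1$ for all $j\in\Omega$, $\sum_{S}x_{b,S}\le 1$ for all $b\in\mathcal B$, $x_{b,S}\ge0$. *)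

(* Defs.v *)
From HB Require Import structures.
From mathcomp Require Import all_boot all_order all_algebra.
From mathcomp Require Import reals.
Set Implicit Arguments. Unset Strict Implicit. Unset Printing Implicit Defensive.
Import Order.TTheory GRing.Theory Num.Theory.
Local Open Scope ring_scope.

Section Defs.
Context {R : realType} {Omega : finType}.

Definition price (p : Omega -> R) (S : {set Omega}) : R := \sum_(j in S) p j.

Definition valuation (v : {set Omega} -> R) : Prop :=
  v set0 = 0 /\ (forall S T : {set Omega}, S \subset T -> v S <= v T).

Definition in_demand (v : {set Omega} -> R) (p : Omega -> R) (S : {set Omega}) : Prop :=
  forall T : {set Omega}, v T - price p T <= v S - price p S.

Definition gross_substitute (v : {set Omega} -> R) : Prop :=
  forall p1 p2 : Omega -> R,
    (forall j, 0 <= p1 j) -> (forall j, p1 j <= p2 j) ->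
    forall D1 : {set Omega}, in_demand v p1 D1 ->
    exists D2 : {set Omega}, in_demand v p2 D2 /\
      (forall j, j \in D1 -> p1 j = p2 j -> j \in D2).

Context {I : finType}.

Definition is_allocation (A : I -> {set Omega}) : Prop :=
  forall b c : I, b != c -> [disjoint A b & A c].

Definition allocated (A : I -> {set Omega}) : {set Omega} := \bigcup_(b : I) A b.

Definition envy_free (v : I -> {set Omega} -> R) (A : I -> {set Omega})
  (p : Omega -> R) : Prop := forall b : I, in_demand (v b) p (A b).

Definition walrasian (v : I -> {set Omega} -> R) (A : I -> {set Omega})
  (p : Omega -> R) : Prop :=
  [/\ is_allocation A, envy_free v A p, (forall j, 0 <= p j) &
      (forall j, j \notin allocated A -> p j = 0)].

Definition walrasian_reserve (r : Omega -> R) (v : I -> {set Omega} -> R)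
  (A : I -> {set Omega}) (p : Omega -> R) : Prop :=
  [/\ is_allocation A, envy_free v A p, (forall j, r j <= p j) &
      (forall j, j \notin allocated A -> p j = r j)].

Definition wer_prices (r : Omega -> R) (v : I -> {set Omega} -> R) : (Omega -> R) -> Prop :=
  fun p => exists A, walrasian_reserve r v A p.

Definition lp_feasible (x : I -> {set Omega} -> R) : Prop :=
  [/\ forall b S, 0 <= x b S,
      forall j : Omega, \sum_(b : I) \sum_(S : {set Omega} | j \in S) x b S <= 1 &
      forall b : I, \sum_(S : {set Omega}) x b S <= 1].

Definition lp_objective (r : Omega -> R) (v : I -> {set Omega} -> R)
  (x : I -> {set Omega} -> R) : R :=
  \sum_(b : I) \sum_(S : {set Omega}) x b S * v b S +
  \sum_(j : Omega) (1 - \sum_(b : I) \sum_(S : {set Omega} | j \in S) x b S) * r j.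

Definition lp_optimal (r : Omega -> R) (v : I -> {set Omega} -> R)
  (x : I -> {set Omega} -> R) : Prop :=
  lp_feasible x /\
  forall y, lp_feasible y -> lp_objective r v y <= lp_objective r v x.

Definition integral (x : I -> {set Omega} -> R) : Prop :=
  forall b S, x b S = 0 \/ x b S = 1.

Definition alloc_vector (A : I -> {set Omega}) : I -> {set Omega} -> R :=
  fun b S => if S == A b then 1 else 0.

(* extended market with extra bidder a = None with additive valuation r(S) *)
Definition ext_val (r : Omega -> R) (v : I -> {set Omega} -> R) :
  option I -> {set Omega} -> R :=
  fun b => match b with Some b => v b | None => price r end.

Definition ext_alloc (A : I -> {set Omega}) : option I -> {set Omega} :=
  fun b => match b with Some b => A b | None => ~: allocated A end.

Definition restrict_prices (r : Omega -> R) (A : I -> {set Omega})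
  (p' : Omega -> R) : Omega -> R :=
  fun j => if j \in allocated A then p' j else r j.

End Defs.

(* Main.v *)
Require Import Defs.
From HB Require Import structures.
From mathcomp Require Import all_boot all_order all_algebra.
From mathcomp Require Import boolp classical_sets reals.
From mathcomp Require Import ring lra.
Set Implicit Arguments. Unset Strict Implicit. Unset Printing Implicit Defensive.
Import Order.TTheory GRing.Theory Num.Theory.
Local Open Scope ring_scope.
Section Farkas.
Variable R : realFieldType.

Lemma one_var (I : finType) (a c : I -> R) :
  (forall i k, 0 < a i -> a k < 0 -> 0 <= c i * - a k + c k * a i) ->
  exists t, forall i, a i != 0 -> a i * t <= c i.
Proof.
move=> H.
case: (pickP (fun i => 0 < a i)) => [i0 Hi0 | Hnp].
  case: (@arg_minP _ _ _ i0 [pred i | 0 < a i] (fun i => c i / a i) Hi0) => im Him Hmin.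
  have {}Him : 0 < a im := Him.
  exists (c im / a im) => i Hi.
  have Eim : a im * (c im / a im) = c im by field; rewrite lt0r_neq0.
  case: (ltrgtP (a i) 0) => [Hn|Hp|]; last by move/eqP; rewrite (negbTE Hi).
    have := H im i Him Hn.
    set t := c im / a im => Hpair.
    have Et : c im = a im * t by rewrite Eim.
    rewrite Et in Hpair. nra.
  have Hle : c im / a im <= c i / a i := Hmin i Hp.
  set t := c im / a im in Hle *.
  have Ei : a i * (c i / a i) = c i by field; rewrite lt0r_neq0.
  set u := c i / a i in Hle Ei. nra.
case: (pickP (fun i => a i < 0)) => [k0 Hk0 | Hnn].
  case: (@arg_maxP _ _ _ k0 [pred i | a i < 0] (fun i => c i / a i) Hk0) => km Hkm Hmax.
  have {}Hkm : a km < 0 := Hkm.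
  exists (c km / a km) => i Hi.
  case: (ltrgtP (a i) 0) => [Hn|Hp|]; last by move/eqP; rewrite (negbTE Hi).
    have Hle : c i / a i <= c km / a km := Hmax i Hn.
    set t := c km / a km in Hle *.
    have Ei : a i * (c i / a i) = c i by field; rewrite ltr0_neq0.
    set u := c i / a i in Hle Ei. nra.
  by move: (Hnp i); rewrite Hp.
exists 0 => i Hi.
case: (ltrgtP (a i) 0) => [Hn|Hp|]; last by move/eqP; rewrite (negbTE Hi).
  by move: (Hnn i); rewrite Hn.
by move: (Hnp i); rewrite Hp.
Qed.

Definition Mc (I : finType) (a : I -> R) (i' : ((I * I) + I)%type) (i2 : I) : R :=
  match i' with
  | inl (i, k) => if (0 < a i) && (a k < 0) then
                   (if i2 == i then - a k else 0) + (if i2 == k then a i else 0)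
                 else 0
  | inr i => if a i == 0 then (if i2 == i then 1 else 0) else 0
  end.

Lemma sum_ind (I : finType) (j : I) (c : R) (f : I -> R) :
  \sum_i (if i == j then c else 0) * f i = c * f j.
Proof.
rewrite (bigD1 j) //= eqxx big1 ?addr0 // => i /negbTE ->; by rewrite mul0r.
Qed.

Lemma sumM_inl (I : finType) (a : I -> R) i k (f : I -> R) :
  0 < a i -> a k < 0 ->
  \sum_i2 Mc a (inl (i, k)) i2 * f i2 = - a k * f i + a i * f k.
Proof.
move=> Hi Hk; rewrite /Mc Hi Hk /=.
under eq_bigr do rewrite mulrDl.
by rewrite big_split /= !sum_ind.
Qed.

Lemma sumM_inr (I : finType) (a : I -> R) i (f : I -> R) :
  a i = 0 -> \sum_i2 Mc a (inr i) i2 * f i2 = f i.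
Proof. by move=> Hi; rewrite /Mc Hi eqxx sum_ind mul1r. Qed.

Lemma sumM_x0 (I : finType) (a : I -> R) i' : \sum_i2 Mc a i' i2 * a i2 = 0.
Proof.
case: i' => [[i k]|i].
  case: (boolP ((0 < a i) && (a k < 0))) => [/andP[Hi Hk]|Hn].
    rewrite sumM_inl //; ring.
  by rewrite /Mc (negbTE Hn) big1 // => *; rewrite mul0r.
case: (boolP (a i == 0)) => [/eqP Hi|Hn]; first by rewrite sumM_inr.
by rewrite /Mc (negbTE Hn) big1 // => *; rewrite mul0r.
Qed.

Lemma Mc_ge0 (I : finType) (a : I -> R) i' i2 : 0 <= Mc a i' i2.
Proof.
case: i' => [[i k]|i] /=.
  case: (boolP ((0 < a i) && (a k < 0))) => [/andP[Hi Hk]|_] //.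
  apply: addr_ge0; case: ifP => // _; lra.
by case: ifP => // _; case: ifP.
Qed.

Lemma comb (I J : finType) (l : J -> R) (M : J -> I -> R) (f : I -> R) :
  \sum_i (\sum_j l j * M j i) * f i = \sum_j l j * \sum_i M j i * f i.
Proof.
under eq_bigr do rewrite mulr_suml.
rewrite exchange_big /=; apply: eq_bigr => j _.
by rewrite mulr_sumr; apply: eq_bigr => i _; rewrite mulrA.
Qed.

Definition feasible (X I : finType) (A : I -> X -> R) (b : I -> R) :=
  exists x : X -> R, forall i, \sum_k A i k * x k <= b i.

Definition certificate (X I : finType) (A : I -> X -> R) (b : I -> R) :=
  exists l : I -> R, [/\ forall i, 0 <= l i,
     forall k, \sum_i l i * A i k = 0 & \sum_i l i * b i < 0].

Lemma farkas_n (X : finType) (n : nat) : forall (Xs : {set X}), #|Xs| = n ->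
  forall (I : finType) (A : I -> X -> R) (b : I -> R),
  (forall i k, k \notin Xs -> A i k = 0) ->
  feasible A b \/ certificate A b.
Proof.
elim: n => [|n IH] Xs Hc I A b HA.
  have A0 : forall i k, A i k = 0.
    by move=> i k; apply: HA; move/eqP: Hc; rewrite cards_eq0 => /eqP ->; rewrite inE.
  case: (pickP (fun i => b i < 0)) => [i0 Hi0 | Hn].
    right; exists (fun i => if i == i0 then 1 else 0); split.
    - by move=> i; case: ifP.
    - by move=> k; rewrite big1 // => i _; rewrite A0 mulr0.
    - by rewrite sum_ind mul1r.
  left; exists (fun _ => 0) => i.
  rewrite big1 => [|k _]; last by rewrite mulr0.
  by move: (Hn i) => /negbT; rewrite -leNgt.
have [x0 Hx0] : exists x0, x0 \in Xs.
  by apply/set0Pn; rewrite -card_gt0 Hc.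
have Hc' : #|Xs :\ x0| = n by move: Hc; rewrite (cardsD1 x0) Hx0 => -[].
pose a i := A i x0.
pose A' i' k := \sum_i Mc a i' i * A i k.
pose b' i' := \sum_i Mc a i' i * b i.
have HA' : forall i' k, k \notin Xs :\ x0 -> A' i' k = 0.
  move=> i' k; rewrite in_setD1 negb_and negbK => /orP[/eqP ->|Hk].
    exact: sumM_x0.
  by rewrite /A' big1 // => i _; rewrite HA // mulr0.
case: (IH _ Hc' _ A' b' HA') => [[x' Hx']|[l' [Hl'0 Hl'A Hl'b]]].
  pose rest i := \sum_k A i k * x' k - a i * x' x0.
  have Hrow : forall i', \sum_k A' i' k * x' k = \sum_i Mc a i' i * (rest i + a i * x' x0).
    move=> i'; rewrite /A'; under eq_bigr do rewrite mulr_suml.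
    rewrite exchange_big /=; apply: eq_bigr => i _.
    rewrite /rest subrK mulr_sumr; apply: eq_bigr => k _; by rewrite mulrA.
  have [t Ht] : exists t, forall i, a i != 0 -> a i * t <= b i - rest i.
    apply: one_var => i k Hi Hk.
    have := Hx' (inl (i, k)); rewrite Hrow /b' !sumM_inl //; lra.
  left; exists (fun k => if k == x0 then t else x' k) => i.
  have -> : \sum_k A i k * (if k == x0 then t else x' k) = rest i + a i * t.
    rewrite (bigD1 x0) //= eqxx /rest (bigD1 x0 (P := xpredT)) //=.
    have -> : \sum_(k | k != x0) A i k * (if k == x0 then t else x' k) =
              \sum_(k | k != x0) A i k * x' k.
      by apply: eq_bigr => k /negbTE ->.
    rewrite /a; ring.
  case: (boolP (a i == 0)) => [/eqP Hai|Hai]; last by have := Ht i Hai; lra.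
  have := Hx' (inr i); rewrite Hrow /b' !sumM_inr // Hai; lra.
right; exists (fun i => \sum_i' l' i' * Mc a i' i); split.
- by move=> i; apply: sumr_ge0 => i' _; apply: mulr_ge0 => //; apply: Mc_ge0.
- by move=> k; rewrite comb; exact: (Hl'A k).
- by rewrite comb.
Qed.

Lemma farkas (X I : finType) (A : I -> X -> R) (b : I -> R) :
  feasible A b \/ certificate A b.
Proof.
apply: (@farkas_n X #|[set: X]| [set: X]) => // i k; by rewrite inE.
Qed.

End Farkas.

Section Econ.
Variables (R : realType) (Omega B : finType).
Variables (v : B -> {set Omega} -> R) (r : Omega -> R).
Hypothesis hv : forall b, valuation (v b).
Hypothesis hr : forall j, 0 <= r j.

Lemma sum_unit (F : unit -> R) : \sum_(i : unit) F i = F tt.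
Proof. by rewrite (bigD1 tt) //= big_pred0 ?addr0 // => -[]. Qed.

Lemma priceD (p q : Omega -> R) (S : {set Omega}) :
  price (fun j => p j + q j) S = price p S + price q S.
Proof. by rewrite /price big_split. Qed.

Lemma price0 (p : Omega -> R) : price p finset.set0 = 0.
Proof. by rewrite /price big_set0. Qed.

Lemma price_ge0 (p : Omega -> R) S : (forall j, 0 <= p j) -> 0 <= price p S.
Proof. by move=> H; apply: sumr_ge0. Qed.

Lemma price_le (p q : Omega -> R) S : (forall j, p j <= q j) -> price p S <= price q S.
Proof. by move=> H; apply: ler_sum. Qed.

Lemma priceE (p : Omega -> R) S : price p S = \sum_j (j \in S)%:R * p j.
Proof.
rewrite /price big_mkcond /=; apply: eq_bigr => j _.
by case: (j \in S); rewrite ?mul1r ?mul0r.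
Qed.

Lemma v0 b : v b finset.set0 = 0. Proof. by case: (hv b). Qed.
Lemma v_mono b (S T : {set Omega}) : S \subset T -> v b S <= v b T. Proof. by case: (hv b) => _; apply. Qed.
Lemma v_ge0 b (S : {set Omega}) : 0 <= v b S.
Proof. by have := v_mono b (finset.sub0set S); rewrite v0. Qed.

Definition load (y : B -> {set Omega} -> R) (j : Omega) :=
  \sum_(b : B) \sum_(S : {set Omega} | j \in S) y b S.

Lemma price_exchange (y : {set Omega} -> R) (p : Omega -> R) :
  \sum_(S : {set Omega}) y S * price p S = \sum_j p j * \sum_(S : {set Omega} | j \in S) y S.
Proof.
under eq_bigr do rewrite priceE mulr_sumr.
rewrite exchange_big /=; apply: eq_bigr => j _.
rewrite mulr_sumr [RHS]big_mkcond /=; apply: eq_bigr => S _.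
by case: (j \in S); rewrite ?mul1r ?mul0r ?mulr0 // mulrC.
Qed.

Lemma weak_duality (y : B -> {set Omega} -> R) (p : Omega -> R) (uu : B -> R) :
  lp_feasible y -> (forall j, r j <= p j) -> (forall b, 0 <= uu b) ->
  (forall b S, v b S - price p S <= uu b) ->
  lp_objective r v y <= \sum_b uu b + \sum_j p j.
Proof.
move=> [Hy0 Hyl Hyb] Hpr Hu0 Hu.
have H1 : \sum_b \sum_S y b S * v b S <= \sum_b uu b + \sum_j p j * load y j.
  rewrite /load.
  have -> : \sum_j p j * (\sum_b \sum_(S : {set Omega} | j \in S) y b S) =
            \sum_b \sum_S y b S * price p S.
    under eq_bigr do rewrite mulr_sumr.
    rewrite exchange_big /=; apply: eq_bigr => b _.
    by rewrite price_exchange.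
  rewrite -big_split /=; apply: ler_sum => b _.
  apply: (@le_trans _ _ (\sum_S y b S * (uu b + price p S))).
    apply: ler_sum => S _; apply: ler_wpM2l => //.
    by have := Hu b S; lra.
  rewrite (eq_bigr (fun S => y b S * uu b + y b S * price p S)); last by move=> S _; rewrite mulrDr.
  rewrite big_split /= lerD2r -mulr_suml.
  rewrite mulrC; apply: ler_piMr => //.
rewrite /lp_objective.
apply: (@le_trans _ _ (\sum_b uu b + \sum_j p j * load y j +
                       \sum_j (1 - load y j) * r j)); first by rewrite lerD2r.
rewrite -addrA lerD2l -big_split /=; apply: ler_sum => j _.
have := Hyl j; have := Hpr j; rewrite /load => h1 h2.
set l := \sum_b \sum_(S : {set Omega} | j \in S) y b S in h2 *.
nra.
Qed.


Definition Wel (A : B -> {set Omega}) :=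
  \sum_b v b (A b) + \sum_j (1 - (j \in allocated A)%:R) * r j.

Lemma alloc_sum (A : B -> {set Omega}) (f : Omega -> R) : is_allocation A ->
  \sum_b price f (A b) = \sum_j (j \in allocated A)%:R * f j.
Proof.
move=> HA; rewrite /price -(partition_disjoint_bigcup _ _ HA).
rewrite big_mkcond /=; apply: eq_bigr => j _.
by rewrite /allocated; case: (j \in _); rewrite ?mul1r ?mul0r.
Qed.

Lemma price_ind (j : Omega) S : price (fun k => (k == j)%:R) S = (j \in S)%:R :> R.
Proof.
rewrite priceE (bigD1 j) //= eqxx mulr1 big1 ?addr0 // => k /negbTE ->.
by rewrite mulr0.
Qed.

Lemma sum_alloc_vec (A : B -> {set Omega}) b (f : {set Omega} -> R) :
  \sum_S alloc_vector A b S * f S = f (A b).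
Proof.
rewrite (bigD1 (A b)) //= /alloc_vector eqxx mul1r big1 ?addr0 // => S /negbTE ->.
by rewrite mul0r.
Qed.

Lemma load_alloc (A : B -> {set Omega}) j : is_allocation A ->
  load (alloc_vector A) j = (j \in allocated A)%:R.
Proof.
move=> HA; rewrite /load.
have -> : \sum_b \sum_(S : {set Omega} | j \in S) alloc_vector (R:=R) A b S =
          \sum_b price (fun k => (k == j)%:R) (A b).
  apply: eq_bigr => b _; rewrite price_ind big_mkcond /=.
  rewrite -(sum_alloc_vec A b (fun S => (j \in S)%:R)).
  apply: eq_bigr => S _; by case: (j \in S); rewrite ?mulr1 ?mulr0.
rewrite alloc_sum // (bigD1 j) //= eqxx mulr1 big1 ?addr0 // => k /negbTE ->.
by rewrite mulr0.
Qed.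

Lemma obj_alloc (A : B -> {set Omega}) : is_allocation A ->
  lp_objective r v (alloc_vector A) = Wel A.
Proof.
move=> HA; rewrite /lp_objective /Wel; congr (_ + _).
  by apply: eq_bigr => b _; rewrite sum_alloc_vec.
apply: eq_bigr => j _; by have := load_alloc j HA; rewrite /load => ->.
Qed.

Lemma feas_alloc (A : B -> {set Omega}) : is_allocation A ->
  lp_feasible (alloc_vector (R:=R) A).
Proof.
move=> HA; split.
- by move=> b S; rewrite /alloc_vector; case: ifP.
- move=> j; have := load_alloc j HA; rewrite /load => ->.
  by case: (j \in _).
- move=> b; have := sum_alloc_vec A b (fun _ => 1).
  under eq_bigr do rewrite mulr1. by move=> ->.
Qed.

Lemma sum_split_alloc (A : B -> {set Omega}) (p : Omega -> R) : is_allocation A ->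
  \sum_j p j = \sum_b price p (A b) + \sum_j (1 - (j \in allocated A)%:R) * p j.
Proof.
move=> HA; rewrite alloc_sum // -big_split /=; apply: eq_bigr => j _; ring.
Qed.

(* complementary slackness: a dual solution matching the welfare gives an equilibrium *)
Lemma cs_wer (A : B -> {set Omega}) (p : Omega -> R) (uu : B -> R) :
  is_allocation A -> (forall j, r j <= p j) ->
  (forall b S, v b S - price p S <= uu b) ->
  \sum_b uu b + \sum_j p j <= Wel A -> walrasian_reserve r v A p.
Proof.
move=> HA Hpr Hu Hsum.
rewrite (sum_split_alloc p HA) /Wel in Hsum.
set s1 := \sum_b (uu b - (v b (A b) - price p (A b))).
set s2 := \sum_j (1 - (j \in allocated A)%:R) * (p j - r j).
have Hs1 : 0 <= s1 by apply: sumr_ge0 => b _; have := Hu b (A b); lra.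
have Hs2 : 0 <= s2.
  apply: sumr_ge0 => j _; have := Hpr j.
  by case: (j \in _) => /= h; rewrite ?subrr ?mul0r // subr0 mul1r; lra.
have Es : s1 + s2 <= 0.
  rewrite /s1 /s2 !sumrB.
  have -> : \sum_j (1 - (j \in allocated A)%:R) * (p j - r j) =
    \sum_j (1 - (j \in allocated A)%:R) * p j - \sum_j (1 - (j \in allocated A)%:R) * r j.
    by rewrite -sumrB; apply: eq_bigr => j _; ring.
  lra.
have E1 : s1 = 0 by lra.
have E2 : s2 = 0 by lra.
split => //.
- move=> b T.
  have Hz : uu b - (v b (A b) - price p (A b)) = 0.
    apply: (psumr_eq0P (P := xpredT) _ E1) => // b' _; have := Hu b' (A b'); lra.
  have := Hu b T; lra.
- move=> j Hj.
  have Hz : (1 - (j \in allocated A)%:R) * (p j - r j) = 0.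
    apply: (psumr_eq0P (P := xpredT) _ E2) => // j' _; have := Hpr j'.
    by case: (j' \in _) => /= h; rewrite ?subrr ?mul0r // subr0 mul1r; lra.
  move: Hz; rewrite (negbTE Hj) subr0 mul1r => /eqP.
  by rewrite subr_eq0 => /eqP.
Qed.


Lemma sum_indR (I : finType) (j : I) (f : I -> R) : \sum_i (i == j)%:R * f i = f j.
Proof.
rewrite (bigD1 j) //= eqxx mul1r big1 ?addr0 // => i /negbTE ->; by rewrite mul0r.
Qed.

Lemma mulNind (c : bool) (x : R) : x * - (c%:R) = - (if c then x else 0).
Proof. by case: c; rewrite /= ?mulr1n ?mulr0n ?mulrN1 ?oppr0 ?mulr0. Qed.

Lemma Nindmul (c : bool) (x : R) : - (c%:R) * x = - (if c then x else 0).
Proof. by rewrite mulrC mulNind. Qed.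

Lemma sum_if_const (I J : finType) (j0 : I) (F : I -> J -> R) :
  \sum_i \sum_k (if j0 == i then F i k else 0) = \sum_k F j0 k.
Proof.
rewrite (bigD1 j0) //= eqxx [X in _ + X]big1 ?addr0 // => i Hi.
by rewrite big1 // => k _; rewrite eq_sym (negbTE Hi).
Qed.

Definition DX := (Omega + B)%type.
Definition DC := ((B * {set Omega}) + (Omega + (B + unit)))%type.

Definition Dmat (i : DC) (k : DX) : R :=
  match i, k with
  | inl (b, SS), inl j => - (j \in SS)%:R
  | inl (b, SS), inr b' => - (b' == b)%:R
  | inr (inl j), inl j' => - (j' == j)%:R
  | inr (inl _), inr _ => 0
  | inr (inr (inl _)), inl _ => 0
  | inr (inr (inl b)), inr b' => - (b' == b)%:R
  | inr (inr (inr _)), _ => 1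
  end.

Definition Dvec (W0 : R) (i : DC) : R :=
  match i with
  | inl (b, SS) => - v b SS
  | inr (inl j) => - r j
  | inr (inr (inl _)) => 0
  | inr (inr (inr _)) => W0
  end.

Lemma sumDX (F : DX -> R) : \sum_k F k = \sum_j F (inl j) + \sum_b F (inr b).
Proof. by rewrite big_sumType. Qed.

Lemma sumDC (F : DC -> R) : \sum_i F i =
  \sum_b \sum_S F (inl (b, S)) + (\sum_j F (inr (inl j)) +
  (\sum_b F (inr (inr (inl b))) + F (inr (inr (inr tt))))).
Proof.
rewrite big_sumType /=; congr (_ + _).
  by rewrite pair_big /=; apply: eq_bigr => -[b S].
by rewrite big_sumType /= big_sumType /= sum_unit.
Qed.

Lemma strong_duality (W0 : R) :
  (forall y, lp_feasible y -> lp_objective r v y <= W0) ->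
  exists p uu, [/\ forall j, r j <= p j, forall b, 0 <= uu b,
     forall b S, v b S - price p S <= uu b &
     \sum_b uu b + \sum_j p j <= W0].
Proof.
move=> Hopt.
case: (farkas (Dmat) (Dvec W0)) => [[x Hx]|[l [Hl0 HlA Hlb]]].
  exists (fun j => x (inl j)), (fun b => x (inr b)).
  have E : forall i, \sum_k Dmat i k * x k =
     \sum_j Dmat i (inl j) * x (inl j) + \sum_b Dmat i (inr b) * x (inr b).
    by move=> i; rewrite sumDX.
  split.
  - move=> j; have := Hx (inr (inl j)); rewrite E /=.
    under eq_bigr do rewrite Nindmul.
    rewrite sumrN -big_mkcond big_pred1_eq.
    under [X in _ + X]eq_bigr do rewrite mul0r.
    rewrite big1 // addr0; lra.
  - move=> b; have := Hx (inr (inr (inl b))); rewrite E /=.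
    under eq_bigr do rewrite mul0r.
    under [X in _ + X]eq_bigr do rewrite Nindmul.
    rewrite big1 // sumrN -big_mkcond big_pred1_eq; lra.
  - move=> b S; have := Hx (inl (b, S)); rewrite E /=.
    under eq_bigr do rewrite Nindmul.
    under [X in _ + X]eq_bigr do rewrite Nindmul.
    rewrite !sumrN -!big_mkcond big_pred1_eq /= -/(price _ S); lra.
  - have := Hx (inr (inr (inr tt))); rewrite E /=.
    under eq_bigr do rewrite mul1r.
    under [X in _ + X]eq_bigr do rewrite mul1r.
    lra.
pose y0 b S := l (inl (b, S)).
pose mu j := l (inr (inl j)).
pose nu b := l (inr (inr (inl b))).
pose th := l (inr (inr (inr tt))).
have Kj : forall j, th = mu j + \sum_b \sum_(S : {set Omega} | j \in S) y0 b S.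
  move=> j; have := HlA (inl j); rewrite sumDC /=.
  under eq_bigr do under eq_bigr do rewrite mulNind.
  under [X in _ + (X + _)]eq_bigr do rewrite mulNind.
  under [X in _ + (_ + (X + _))]eq_bigr do rewrite mulr0.
  rewrite big1_eq add0r mulr1.
  under eq_bigr do rewrite sumrN -big_mkcond.
  rewrite sumrN sumrN -big_mkcond /= (big_pred1 j) => [|k]; last by rewrite eq_sym.
  rewrite /th /mu /y0; lra.
have Kb : forall b, th = nu b + \sum_S y0 b S.
  move=> b; have := HlA (inr b); rewrite sumDC /=.
  under eq_bigr do under eq_bigr do rewrite mulNind.
  under [X in _ + (X + _)]eq_bigr do rewrite mulr0.
  under [X in _ + (_ + (X + _))]eq_bigr do rewrite mulNind.
  rewrite big1_eq add0r mulr1.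
  under eq_bigr do rewrite sumrN.
  rewrite sumrN sumrN (sum_if_const b (fun i k => l (inl (i, k)))).
  rewrite -big_mkcond /= (big_pred1 b) => [|k]; last by rewrite eq_sym.
  rewrite /th /nu /y0; lra.
have Ks : th * W0 < \sum_b \sum_S y0 b S * v b S + \sum_j mu j * r j.
  move: Hlb; rewrite sumDC /=.
  under eq_bigr do under eq_bigr do rewrite mulrN.
  under [X in _ + (X + _)]eq_bigr do rewrite mulrN.
  under [X in _ + (_ + (X + _))]eq_bigr do rewrite mulr0.
  rewrite big1_eq add0r.
  under eq_bigr do rewrite sumrN.
  rewrite !sumrN /th /mu /y0; lra.
have Hth : 0 <= th by apply: Hl0.
have Hy0 : forall b S, 0 <= y0 b S by move=> b S; apply: Hl0.
case: (ltrgtP th 0) => [//|Hthp|Hth0]; first by move: Hth; rewrite leNgt => /negP.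
  pose y b S := y0 b S / th.
  have Hfe : lp_feasible y.
    split.
    - by move=> b S; apply: divr_ge0.
    - move=> j; rewrite /y.
      under eq_bigr do rewrite -mulr_suml.
      rewrite -mulr_suml ler_pdivrMr // mul1r.
      have := Kj j; have : 0 <= mu j by apply: Hl0.
      lra.
    - move=> b; rewrite /y -mulr_suml ler_pdivrMr // mul1r.
      have := Kb b; have : 0 <= nu b by apply: Hl0.
      lra.
  have := Hopt y Hfe.
  have Eobj : th * lp_objective r v y =
              \sum_b \sum_S y0 b S * v b S + \sum_j mu j * r j.
    rewrite /lp_objective mulrDr; congr (_ + _).
      rewrite mulr_sumr; apply: eq_bigr => b _.
      rewrite mulr_sumr; apply: eq_bigr => S _; rewrite /y; field.
      by rewrite gt_eqF.
    rewrite mulr_sumr; apply: eq_bigr => j _.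
    have -> : \sum_b \sum_(S : {set Omega} | j \in S) y b S =
              (\sum_b \sum_(S : {set Omega} | j \in S) y0 b S) / th.
      rewrite mulr_suml; apply: eq_bigr => b _.
      rewrite mulr_suml; apply: eq_bigr => S _; done.
    have := Kj j; set L := \sum_b _ => HK.
    have -> : mu j = th - L by lra.
    field; by rewrite gt_eqF.
  move=> Hle.
  have : th * lp_objective r v y <= th * W0 by apply: ler_wpM2l.
  lra.
exfalso.
have Hz : forall b S, y0 b S = 0.
  move=> b S; have := Kb b; rewrite Hth0 => Hk.
  have Hnu : 0 <= nu b by apply: Hl0.
  have Hs : \sum_S y0 b S = 0.
    apply/eqP; rewrite eq_le; apply/andP; split; last by apply: sumr_ge0.
    lra.
  exact: (psumr_eq0P (P := xpredT) (fun S _ => Hy0 b S) Hs).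
have Hmu : forall j, mu j = 0.
  move=> j; have := Kj j; rewrite Hth0.
  rewrite big1 => [|b _]; last by rewrite big1 // => S _; apply: Hz.
  lra.
move: Ks; rewrite Hth0 mul0r big1 => [|b _]; last first.
  by rewrite big1 // => S _; rewrite Hz mul0r.
rewrite big1 => [|j _]; last by rewrite Hmu mul0r.
by rewrite addr0 ltxx.
Qed.


Lemma value_eq (A : B -> {set Omega}) (p : Omega -> R) : is_allocation A ->
  (forall j, j \notin allocated A -> p j = r j) ->
  \sum_b (v b (A b) - price p (A b)) + \sum_j p j = Wel A.
Proof.
move=> HA Hun; rewrite (sum_split_alloc p HA) /Wel sumrB.
have -> : \sum_j (1 - (j \in allocated A)%:R) * p j =
          \sum_j (1 - (j \in allocated A)%:R) * r j.
  apply: eq_bigr => j _; case: (boolP (j \in allocated A)) => Hj.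
    by rewrite /= subrr !mul0r.
  by rewrite Hun.
lra.
Qed.

Definition uw (A : B -> {set Omega}) (p : Omega -> R) b := v b (A b) - price p (A b).

Lemma wer_uw A p : walrasian_reserve r v A p ->
  [/\ forall b, 0 <= uw A p b, forall b S, v b S - price p S <= uw A p b &
      \sum_b uw A p b + \sum_j p j = Wel A].
Proof.
case=> HA Hef Hpr Hun; split.
- move=> b; have := Hef b finset.set0; rewrite v0 price0 /uw; lra.
- by move=> b S; apply: Hef.
rewrite (sum_split_alloc p HA) /Wel /uw sumrB.
have -> : \sum_j (1 - (j \in allocated A)%:R) * p j =
          \sum_j (1 - (j \in allocated A)%:R) * r j.
  apply: eq_bigr => j _; case: (boolP (j \in allocated A)) => Hj.
    by rewrite /= subrr !mul0r.
  by rewrite Hun.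
lra.
Qed.

Lemma a2_equiv (A : B -> {set Omega}) : is_allocation A ->
  (exists p, walrasian_reserve r v A p) <->
  (integral (alloc_vector (R:=R) A) /\ lp_optimal r v (alloc_vector A)).
Proof.
move=> HA; split.
  move=> [p Hw]; split.
    by move=> b S; rewrite /alloc_vector; case: ifP; [right|left].
  split; first exact: feas_alloc.
  move=> y Hy; rewrite obj_alloc //.
  have [Hu0 Hu HE] := wer_uw Hw.
  rewrite -HE; apply: weak_duality => //.
  by case: Hw.
move=> [_ [_ Hopt]].
have [p [uu [Hpr Hu0 Hu Hs]]] : exists p uu, [/\ forall j, r j <= p j, forall b, 0 <= uu b,
     forall b S, v b S - price p S <= uu b &
     \sum_b uu b + \sum_j p j <= Wel A].
  apply: strong_duality => y Hy; rewrite -obj_alloc //; exact: Hopt.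
by exists p; apply: (cs_wer (uu := uu)).
Qed.

Lemma a1_fwd A p : walrasian_reserve r v A p ->
  walrasian (ext_val r v) (ext_alloc A) p.
Proof.
case=> HA Hef Hpr Hun; split.
- case=> [b|] [c|] //=.
  + by move=> Hbc; apply: HA; apply: contra Hbc => /eqP ->.
  + move=> _; rewrite finset.disjoints_subset; apply/fintype.subsetP => j Hj.
    rewrite !inE negbK; apply/finset.bigcupP; by exists b.
  + move=> _; rewrite finset.disjoints_subset; apply/fintype.subsetP => j Hj.
    move: Hj; rewrite !inE; apply: contra => Hc; apply/finset.bigcupP; by exists c.
- case=> [b|] T /=.
  + exact: (Hef b T).
  + have -> : price r (~: allocated A) - price p (~: allocated A) = 0.
      rewrite /price -sumrB big1 // => j; rewrite inE => Hj; by rewrite Hun // subrr.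
    rewrite /price -sumrB; apply: sumr_le0 => j _; have := Hpr j; lra.
- by move=> j; apply: le_trans (Hpr j).
- move=> j; rewrite /allocated => /finset.bigcupP Hn; exfalso; apply: Hn.
  case: (boolP (j \in allocated A)) => Hj.
    by move/finset.bigcupP: Hj => [b _ Hb]; exists (Some b).
  by exists None => //=; rewrite inE.
Qed.

Lemma a1_bwd A p' : walrasian (ext_val r v) (ext_alloc A) p' ->
  walrasian_reserve r v A (restrict_prices r A p').
Proof.
case=> HA Hef Hp0 _.
set U := ~: allocated A.
have HN := Hef None; rewrite /= -/U in HN.
have Hal : forall j, j \in allocated A -> r j <= p' j.
  move=> j Hj.
  have HjU : j \notin U by rewrite inE negbK.
  have e1 : price r (j |: U) = r j + price r U := big_setU1 _ HjU.
  have e2 : price p' (j |: U) = p' j + price p' U := big_setU1 _ HjU.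
  have := HN (j |: U); lra.
have Hun : forall j, j \notin allocated A -> p' j <= r j.
  move=> j Hj.
  have HjU : j \in U by rewrite inE.
  have e1 : price r U = r j + price r (U :\ j) := big_setD1 _ HjU.
  have e2 : price p' U = p' j + price p' (U :\ j) := big_setD1 _ HjU.
  have := HN (U :\ j); lra.
split.
- move=> b c Hbc; apply: (HA (Some b) (Some c)); by apply: contra Hbc => /eqP [->].
- move=> b T; have := Hef (Some b) T; rewrite /=.
  have -> : price (restrict_prices r A p') (A b) = price p' (A b).
    apply: eq_bigr => j Hj; rewrite /restrict_prices ifT //.
    by apply/finset.bigcupP; exists b.
  have : price p' T <= price (restrict_prices r A p') T.
    apply: price_le => j; rewrite /restrict_prices; case: ifP => // /negbT.
    exact: Hun.
  lra.
- move=> j; rewrite /restrict_prices; case: ifP => // Hj; exact: Hal.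
- by move=> j Hj; rewrite /restrict_prices (negbTE Hj).
Qed.


Lemma allocP (A : B -> {set Omega}) :
  is_allocation A <-> (forall j b c, j \in A b -> j \in A c -> b = c).
Proof.
split.
  move=> HA j b c Hb Hc; apply/eqP; apply/negPn/negP => Hbc.
  by have := disjointFr (HA b c Hbc) Hb; rewrite Hc.
move=> H b c Hbc; rewrite finset.disjoints_subset; apply/fintype.subsetP => j Hb.
rewrite inE; apply/negP => Hc; move: Hbc; by rewrite (H j b c Hb Hc) eqxx.
Qed.

Lemma ex_max (T : finType) (t0 : T) (f : T -> R) : exists x, forall y, f y <= f x.
Proof.
case: (@arg_maxP _ _ _ t0 xpredT f isT) => x _ H; exists x => y; exact: H.
Qed.

Lemma price_elem (q : Omega -> R) (S : {set Omega}) j : (forall k, 0 <= q k) -> j \in S -> q j <= price q S.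
Proof.
move=> Hq Hj; rewrite /price (big_setD1 _ Hj) /=.
have : 0 <= \sum_(k in S :\ j) q k by apply: sumr_ge0.
lra.
Qed.

Lemma price_ext (p q : Omega -> R) (S : {set Omega}) : (forall j, j \in S -> p j = q j) -> price p S = price q S.
Proof. by move=> H; apply: eq_bigr. Qed.

Lemma demand_ext (f : {set Omega} -> R) (p q : Omega -> R) (S : {set Omega}) :
  (forall j, p j = q j) -> in_demand f p S -> in_demand f q S.
Proof.
move=> H Hd T; rewrite -!(price_ext (p := p) (q := q)) //; exact: Hd.
Qed.

Definition Mv := \sum_b v b [set: Omega].

Lemma Mv_ge b (S : {set Omega}) : v b S <= Mv.
Proof.
apply: (@le_trans _ _ (v b [set: Omega])); first by apply: v_mono; apply: finset.subsetT.
rewrite /Mv (bigD1 b) //=.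
have : 0 <= \sum_(c | c != b) v c [set: Omega] by apply: sumr_ge0 => c _; apply: v_ge0.
lra.
Qed.

Lemma Mv_ge0 : 0 <= Mv.
Proof. by apply: sumr_ge0 => b _; apply: v_ge0. Qed.

Section Auction.
Variable eps : R.
Hypothesis eps_gt0 : 0 < eps.
Hypothesis GS : forall b, gross_substitute (v b).

Definition pb (H : B -> {set Omega}) (p : Omega -> R) b : Omega -> R :=
  fun j => if j \in H b then p j else p j + eps.

Definition Inv (H : B -> {set Omega}) (p : Omega -> R) :=
  [/\ is_allocation H, (forall j, j \notin allocated H -> p j = r j),
      (forall j, r j <= p j), (forall j, p j <= r j + Mv) &
      (forall b, exists D, in_demand (v b) (pb H p b) D /\ H b \subset D)].

Definition improvable H p :=
  exists b D, [/\ in_demand (v b) (pb H p b) D, H b \subset D & H b != D].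

Lemma pb_ge0 H p b : (forall j, r j <= p j) -> forall j, 0 <= pb H p b j.
Proof.
move=> Hp j; rewrite /pb; have := hr j; have := Hp j; case: ifP => _ h1 h2; have := eps_gt0; lra.
Qed.

Lemma auction_step H p : Inv H p -> improvable H p ->
  exists H' p', Inv H' p' /\ \sum_j p j + eps <= \sum_j p' j.
Proof.
move=> [HA Hun Hpr Hbd Hdem] [b0 [D [HD HsD HnD]]].
pose H' := fun c => if c == b0 then D else H c :\: D.
pose p' := fun j => if (j \in D) && (j \notin H b0) then p j + eps else p j.
have Hpp : forall j, p j <= p' j.
  by move=> j; rewrite /p'; case: ifP => _; have := eps_gt0; lra.
have HH'c : forall c j, c != b0 -> j \in H' c -> j \in H c /\ j \notin D.
  move=> c j Hc; rewrite /H' (negbTE Hc) inE => /andP[h1 h2]; by [].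
have HA' : is_allocation H'.
  apply/allocP => j b c; rewrite /H'.
  case: (eqVneq b b0) => [->|Hb]; case: (eqVneq c b0) => [->|Hc] //;
    rewrite ?eqxx ?(negbTE Hb) ?(negbTE Hc).
  - by move=> h1; rewrite !inE h1.
  - by rewrite !inE => /andP[h1 _] h2; rewrite h2 in h1.
  - rewrite !inE => /andP[_ h1] /andP[_ h2]; exact: (proj1 (allocP H) HA j b c).
exists H', p'; split; last first.
  have [j0 Hj0] : exists j0, (j0 \in D) && (j0 \notin H b0).
    apply/existsP; apply: contraNT HnD; rewrite negb_exists => /forallP Hall.
    rewrite finset.eqEsubset HsD /=; apply/fintype.subsetP => j Hj.
    by have := Hall j; rewrite Hj /= negbK.
  have -> : \sum_j p' j = \sum_j p j + \sum_j (p' j - p j).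
    by rewrite sumrB; lra.
  rewrite lerD2l (bigD1 j0) //= /p' Hj0.
  have : 0 <= \sum_(j | j != j0) (p' j - p j).
    by apply: sumr_ge0 => j _; have := Hpp j; rewrite /p'; lra.
  rewrite /p'; lra.
split => //.
- move=> j Hj; have Hj' : j \notin allocated H.
    apply/negP => /finset.bigcupP [c _ Hc]; move/negP: Hj; apply.
    apply/finset.bigcupP; case: (eqVneq c b0) => [Ec|Hc'].
      by exists b0 => //; rewrite /H' eqxx; move/fintype.subsetP: HsD; apply; rewrite -Ec.
    case: (boolP (j \in D)) => HjD.
      by exists b0 => //; rewrite /H' eqxx.
    by exists c => //; rewrite /H' (negbTE Hc') inE HjD.
  have HjD : j \notin D.
    apply/negP => HjD; move/negP: Hj; apply; apply/finset.bigcupP.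
    by exists b0 => //; rewrite /H' eqxx.
  by rewrite /p' (negbTE HjD) /= Hun.
- by move=> j; apply: le_trans (Hpp j).
- move=> j; rewrite /p'; case: ifP => [/andP[HjD HjH]|_]; last exact: Hbd.
  have Hpbj : pb H p b0 j = p j + eps by rewrite /pb (negbTE HjH).
  have := price_elem (@pb_ge0 H p b0 Hpr) HjD; rewrite Hpbj => h1.
  have := HD finset.set0; rewrite v0 price0 => h2.
  have := Mv_ge b0 D; have := hr j; lra.
- move=> c; case: (eqVneq c b0) => [->|Hc].
    exists D; split; last by rewrite /H' eqxx.
    apply: (demand_ext _ HD) => j; rewrite /pb /H' eqxx /p'.
    case: (boolP (j \in H b0)) => HjH; case: (boolP (j \in D)) => HjD //=.
    by move/fintype.subsetP: HsD => /(_ _ HjH); rewrite (negbTE HjD).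
  have [Dc [HDc HsDc]] := Hdem c.
  have Hle : forall j, pb H p c j <= pb H' p' c j.
    move=> j; have := Hpp j; have := eps_gt0; rewrite /pb.
    case: ifP => Hj1; case: ifP => Hj2 h1 h2; try lra.
    by have [h _] := HH'c c j Hc Hj2; rewrite h in Hj1.
  have [D2 [HD2 HD2s]] := GS (@pb_ge0 H p c Hpr) Hle HDc.
  exists D2; split => //; apply/fintype.subsetP => j Hj.
  have [HjH HjD] := HH'c c j Hc Hj.
  apply: HD2s; first by move/fintype.subsetP: HsDc; apply.
  by rewrite /pb HjH Hj /p' (negbTE HjD).
Qed.

Definition Bnd := \sum_j (r j + Mv).

Lemma auction_end H p : Inv H p -> ~ improvable H p ->
  forall b, in_demand (v b) (pb H p b) (H b).
Proof.
move=> [_ _ _ _ Hdem] Hni b; have [D [HD Hs]] := Hdem b.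
case: (eqVneq (H b) D) => [->//|Hne]; exfalso; apply: Hni; by exists b, D.
Qed.

Lemma auction_iter N : forall H p, Inv H p -> Bnd - N%:R * eps <= \sum_j p j ->
  exists H' p', Inv H' p' /\ ~ improvable H' p'.
Proof.
elim: N => [|N IH] H p HI Hs.
  have [Himp|Hni] := pselect (improvable H p); last by exists H, p.
  have [H' [p' [HI' Hs']]] := auction_step HI Himp.
  have : \sum_j p' j <= Bnd.
    by case: HI' => _ _ _ Hbd _; apply: ler_sum => j _; apply: Hbd.
  move: Hs; rewrite mul0r subr0 => Hs; have := eps_gt0; lra.
have [Himp|Hni] := pselect (improvable H p); last by exists H, p.
have [H' [p' [HI' Hs']]] := auction_step HI Himp.
apply: (IH H' p' HI'); move: Hs; rewrite -natr1 mulrDl mul1r; lra.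
Qed.

Lemma auction_exists : exists H p, Inv H p /\ ~ improvable H p.
Proof.
pose H0 := fun _ : B => finset.set0 : {set Omega}.
have HI : Inv H0 r.
  split.
  - by apply/allocP => j b c; rewrite /H0 inE.
  - by [].
  - by [].
  - by move=> j; have := Mv_ge0; lra.
  - move=> b; have [D HD] := ex_max finset.set0 (fun S => v b S - price (pb H0 r b) S).
    by exists D; split => //; apply: finset.sub0set.
set K := \sum_(j : Omega) Mv.
have HK : 0 <= K by apply: sumr_ge0 => j _; apply: Mv_ge0.
have HKe : 0 <= K / eps by apply: divr_ge0 => //; apply: ltW.
have HN := archi_boundP HKe.
apply: (auction_iter (N := Num.Def.archi_bound (K / eps)) HI).
have : K <= (Num.Def.archi_bound (K / eps))%:R * eps.
  by rewrite -ler_pdivrMr //; apply: ltW.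
rewrite /Bnd big_split /= -/K; lra.
Qed.

Lemma approx_value : exists H, is_allocation H /\
  forall y, lp_feasible y -> lp_objective r v y <= Wel H + \sum_(b : B) \sum_(j : Omega) eps.
Proof.
have [H [p [HI Hni]]] := auction_exists.
have Hdem := auction_end HI Hni.
case: HI => HA Hun Hpr _ _.
exists H; split => // y Hy.
pose uu b := v b (H b) - price p (H b) + \sum_(j : Omega) eps.
have Hu : forall b S, v b S - price p S <= uu b.
  move=> b S; have := Hdem b S.
  have -> : price (pb H p b) (H b) = price p (H b).
    by apply: price_ext => j Hj; rewrite /pb Hj.
  have : price (pb H p b) S <= price p S + \sum_(j : Omega) eps.
    apply: (@le_trans _ _ (price (fun j => p j + eps) S)).
      by apply: price_le => j; rewrite /pb; case: ifP => _; have := eps_gt0; lra.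
    rewrite priceD lerD2l priceE; apply: ler_sum => j _.
    by case: (j \in S); rewrite /= ?mul1r ?mul0r //; apply: ltW.
  rewrite /uu; lra.
have Hu0 : forall b, 0 <= uu b.
  by move=> b; have := Hu b finset.set0; rewrite v0 price0; lra.
apply: (le_trans (weak_duality Hy Hpr Hu0 Hu)).
rewrite /uu big_split /= -addrA [X in _ + X]addrC addrA value_eq //.
Qed.

End Auction.

Lemma small_le (x y c : R) : 0 <= c -> (forall e, 0 < e -> x <= y + c * e) -> x <= y.
Proof.
move=> Hc H; rewrite leNgt; apply/negP => Hlt.
pose e := (x - y) / (c + 1).
have He : 0 < e by apply: divr_gt0; lra.
have Ee : e * (c + 1) = x - y by rewrite /e; field; lra.
have := H e He; nra.
Qed.

Definition allocb (A : {ffun B -> {set Omega}}) :=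
  [forall b, forall c, (b != c) ==> [disjoint A b & A c]].

Lemma allocbP (A : {ffun B -> {set Omega}}) : reflect (is_allocation A) (allocb A).
Proof.
apply: (iffP forallP) => H.
  by move=> b c Hbc; move/forallP: (H b) => /(_ c) /implyP; apply.
by move=> b; apply/forallP => c; apply/implyP; apply: H.
Qed.

Lemma ex_max_wel : exists A, is_allocation A /\
  forall H, is_allocation H -> Wel H <= Wel A.
Proof.
have H0 : allocb [ffun _ => finset.set0].
  apply/allocbP => b c _; rewrite ffunE; rewrite finset.disjoints_subset; apply: finset.sub0set.
case: (@arg_maxP _ _ _ _ allocb (fun A => Wel A) H0) => A HA Hmax.
exists A; split; first exact/allocbP.
move=> H HH.
have E : (finfun H : B -> {set Omega}) = H by apply: funext => b; rewrite ffunE.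
have := Hmax (finfun H); rewrite E; apply; apply/allocbP; by rewrite E.
Qed.

Lemma exists_wer : (forall b, gross_substitute (v b)) ->
  exists A p, walrasian_reserve r v A p.
Proof.
move=> GS.
have [A [HA Hmax]] := ex_max_wel.
have Hopt : forall y, lp_feasible y -> lp_objective r v y <= Wel A.
  move=> y Hy.
  apply: (@small_le _ _ (\sum_(b : B) \sum_(j : Omega) 1)).
    by apply: sumr_ge0 => b _; apply: sumr_ge0.
  move=> e He; have [H [HH Hval]] := approx_value He GS.
  have := Hval y Hy; have := Hmax H HH.
  have -> : \sum_(b : B) \sum_(j : Omega) e = (\sum_(b : B) \sum_(j : Omega) 1) * e.
    rewrite mulr_suml; apply: eq_bigr => b _; rewrite mulr_suml.
    by apply: eq_bigr => j _; rewrite mul1r.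
  lra.
have [p [uu [Hpr Hu0 Hu Hs]]] := strong_duality Hopt.
by exists A, p; apply: (cs_wer (uu := uu)).
Qed.


Lemma minmax_cases (a c : R) :
  (Num.min a c = a /\ Num.max a c = c /\ a <= c) \/
  (Num.min a c = c /\ Num.max a c = a /\ c <= a).
Proof.
case: (lerP a c) => h; first by left.
by right; split; [|split] => //; apply: ltW.
Qed.

Definition fmax (T : finType) (t0 : T) (P : pred T) (f : T -> R) :=
  f [arg max_(x > t0 | P x) f x]%O.

Lemma fmaxP (T : finType) (t0 : T) (P : pred T) (f : T -> R) : P t0 ->
  (forall x, P x -> f x <= fmax t0 P f) /\ (exists x, P x /\ fmax t0 P f = f x).
Proof.
move=> H0; rewrite /fmax; case: (@arg_maxP _ _ _ t0 P f H0) => x Px Hx.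
by split => //; exists x.
Qed.

Definition padd (p q : Omega -> R) := fun k => p k + q k.
Definition ee (i : Omega) (s : R) := fun k => if k == i then s else 0.

Lemma price_ee i s (S : {set Omega}) : price (ee i s) S = if i \in S then s else 0.
Proof.
rewrite priceE /ee (bigD1 i) //= eqxx big1 ?addr0 => [|k /negbTE ->]; last by rewrite mulr0.
by case: (i \in S); rewrite /= ?mul1r ?mul0r.
Qed.

Section Sub.
Variable w : {set Omega} -> R.
Hypothesis GSw : gross_substitute w.

Definition uf (p : Omega -> R) (S : {set Omega}) := w S - price p S.
Definition V p := fmax finset.set0 xpredT (uf p).
Definition Vp i p := fmax [set i] (fun S => i \in S) (uf p).
Definition Vm i p := fmax finset.set0 (fun S => i \notin S) (uf p).

Lemma uf_ee p i s S : uf (padd p (ee i s)) S = uf p S - (if i \in S then s else 0).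
Proof. by rewrite /uf /padd priceD price_ee; lra. Qed.

Lemma VP p : (forall S, uf p S <= V p) /\ exists S, V p = uf p S.
Proof.
have [H1 [S [_ H2]]] := @fmaxP _ finset.set0 xpredT (uf p) isT.
by split => [T|]; [apply: H1|exists S].
Qed.

Lemma VpP (i : Omega) p : (forall S : {set Omega}, i \in S -> uf p S <= Vp i p) /\ exists S : {set Omega}, i \in S /\ Vp i p = uf p S.
Proof. apply: fmaxP; by rewrite inE. Qed.

Lemma VmP (i : Omega) p : (forall S : {set Omega}, i \notin S -> uf p S <= Vm i p) /\ exists S : {set Omega}, i \notin S /\ Vm i p = uf p S.
Proof. apply: fmaxP; by rewrite inE. Qed.

Lemma V_char p i s :
  [/\ Vp i p - s <= V (padd p (ee i s)), Vm i p <= V (padd p (ee i s)) &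
      V (padd p (ee i s)) <= Vp i p - s \/ V (padd p (ee i s)) <= Vm i p].
Proof.
have [HV1 [S HS]] := VP (padd p (ee i s)).
have [Hp1 [Sp [HSp ESp]]] := VpP i p.
have [Hm1 [Sm [HSm ESm]]] := VmP i p.
split.
- have := HV1 Sp; rewrite uf_ee HSp ESp; lra.
- have := HV1 Sm; rewrite uf_ee (negbTE HSm) ESm; lra.
- rewrite HS uf_ee; case: (boolP (i \in S)) => Hi.
    by left; have := Hp1 S Hi; lra.
  by right; have := Hm1 S Hi; lra.
Qed.

Lemma padd_ee0 p i : padd p (ee i 0) = p.
Proof. by apply: funext => k; rewrite /padd /ee; case: ifP => _; rewrite addr0. Qed.

Lemma delta_mono p i j t : (forall k, 0 <= p k) -> i != j -> 0 <= t ->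
  0 < Vp i p - Vm i p ->
  Vp i p - Vm i p <= Vp i (padd p (ee j t)) - Vm i (padd p (ee j t)).
Proof.
move=> Hp Hij Ht Hd.
set d := Vp i p - Vm i p.
pose Q := padd p (ee i d).
have [Hp1 [Sp [HSp ESp]]] := VpP i p.
have [Hm1 _] := VmP i p.
have HQ : in_demand w Q Sp.
  move=> T; rewrite -/(uf Q T) -/(uf Q Sp) !uf_ee HSp.
  case: (boolP (i \in T)) => Hi.
    by have := Hp1 T Hi; rewrite /d; lra.
  by have := Hm1 T Hi; rewrite /d; lra.
have HQ0 : forall k, 0 <= Q k.
  by move=> k; rewrite /Q /padd /ee; case: ifP => _; have := Hp k; rewrite /d; lra.
have HQle : forall k, Q k <= padd Q (ee j t) k.
  by move=> k; rewrite /padd /ee; case: ifP => _; lra.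
have [D2 [HD2 HD2s]] := GSw HQ0 HQle HQ.
have HiD2 : i \in D2.
  apply: HD2s => //; rewrite /padd /ee (negbTE Hij) addr0 //.
set P' := padd p (ee j t).
have [Hp1' _] := VpP i P'.
have [_ [Sm' [HSm' ESm']]] := VmP i P'.
have EQ : forall T, uf (padd Q (ee j t)) T = uf P' T - (if i \in T then d else 0).
  move=> T; rewrite /uf /padd /P' /Q !priceD !price_ee; move: (if i \in T then d else 0) (if j \in T then t else 0) => X Y; lra.
have := HD2 Sm'; rewrite -/(uf _ Sm') -/(uf _ D2) !EQ HiD2 (negbTE HSm').
have := Hp1' D2 HiD2; rewrite ESm'; lra.
Qed.

Lemma pairwise p i j s t : (forall k, 0 <= p k) -> i != j -> 0 <= s -> 0 <= t ->
  V p - V (padd p (ee i s)) <=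
  V (padd p (ee j t)) - V (padd (padd p (ee j t)) (ee i s)).
Proof.
move=> Hp Hij Hs Ht.
set P' := padd p (ee j t).
have [a1 a2 a3] := V_char p i s.
have [b1 b2 b3] := V_char p i 0.
have [c1 c2 c3] := V_char P' i s.
have [d1 d2 d3] := V_char P' i 0.
rewrite padd_ee0 in b1 b2 b3.
rewrite padd_ee0 in d1 d2 d3.
case: (ltrP 0 (Vp i p - Vm i p)) => Hd.
  have := delta_mono Hp Hij Ht Hd; rewrite -/P' => Hm.
  by case: a3; case: b3; case: c3; case: d3; lra.
by case: a3; case: b3; case: c3; case: d3; lra.
Qed.

Lemma mono1 i s (Hs : 0 <= s) n : forall x y : Omega -> R,
  #|[set k | x k != y k]| = n -> (forall k, 0 <= x k) -> (forall k, x k <= y k) ->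
  y i = x i ->
  V x - V (padd x (ee i s)) <= V y - V (padd y (ee i s)).
Proof.
elim: n => [|n IH] x y Hc Hx Hxy Hi.
  have -> : x = y.
    apply: funext => k; apply/eqP; apply/negPn/negP => Hk.
    by move/eqP: Hc; rewrite cards_eq0 => /eqP /setP /(_ k); rewrite !inE Hk.
  by [].
have [j Hj] : exists j, j \in [set k | x k != y k].
  by apply/set0Pn; rewrite -card_gt0 Hc.
have Hj' : x j != y j by move: Hj; rewrite inE.
have Hij : i != j by apply: contraNneq Hj' => <-; rewrite Hi.
pose x' := padd x (ee j (y j - x j)).
have Hc' : #|[set k | x' k != y k]| = n.
  have -> : [set k | x' k != y k] = [set k | x k != y k] :\ j.
    apply/setP => k; rewrite !inE /x' /padd /ee.
    case: (eqVneq k j) => [->|Hk] /=; first by rewrite addrC subrK eqxx.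
    by rewrite addr0.
  by move: Hc; rewrite (cardsD1 j) Hj => -[].
have Ht : 0 <= y j - x j by have := Hxy j; lra.
have H1 := pairwise Hx Hij Hs Ht.
apply: (le_trans H1); apply: IH => //.
- move=> k; rewrite /x' /padd /ee; case: ifP => _; have := Hx k; have := Hxy k; lra.
- move=> k; rewrite /x' /padd /ee; case: ifP => [/eqP ->|_]; have := Hxy k; lra.
- by rewrite /x' /padd /ee (negbTE Hij) addr0.
Qed.

Lemma mono_full n : forall x y z : Omega -> R,
  #|[set k | z k != 0]| = n -> (forall k, 0 <= x k) -> (forall k, x k <= y k) ->
  (forall k, 0 <= z k) -> (forall k, z k != 0 -> x k = y k) ->
  V x - V (padd x z) <= V y - V (padd y z).
Proof.
elim: n => [|n IH] x y z Hc Hx Hxy Hz Hzxy.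
  have Ez : forall k, z k = 0.
    move=> k; apply/eqP; apply/negPn/negP => Hk.
    by move/eqP: Hc; rewrite cards_eq0 => /eqP /setP /(_ k); rewrite !inE Hk.
  have E : forall u, padd u z = u by move=> u; apply: funext => k; rewrite /padd Ez addr0.
  by rewrite !E !subrr.
have [i Hi] : exists i, i \in [set k | z k != 0].
  by apply/set0Pn; rewrite -card_gt0 Hc.
have Hi' : z i != 0 by move: Hi; rewrite inE.
pose z' := fun k => if k == i then 0 else z k.
have E : forall u, padd u z = padd (padd u (ee i (z i))) z'.
  move=> u; apply: funext => k; rewrite /padd /ee /z'.
  by case: (eqVneq k i) => [->|_]; rewrite ?addr0.
have Hc' : #|[set k | z' k != 0]| = n.
  have -> : [set k | z' k != 0] = [set k | z k != 0] :\ i.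
    apply/setP => k; rewrite !inE /z'.
    by case: (eqVneq k i) => [->|Hk] /=; rewrite ?eqxx.
  by move: Hc; rewrite (cardsD1 i) Hi => -[].
rewrite !(E x) !(E y).
have H1 := mono1 (Hz i) (erefl _) Hx Hxy (esym (Hzxy i Hi')).
have H2 : V (padd x (ee i (z i))) - V (padd (padd x (ee i (z i))) z') <=
          V (padd y (ee i (z i))) - V (padd (padd y (ee i (z i))) z').
  apply: IH => //.
  - move=> k; rewrite /padd /ee; case: ifP => _; have := Hx k; have := Hz i; lra.
  - by move=> k; rewrite /padd; have := Hxy k; lra.
  - by move=> k; rewrite /z'; case: ifP.
  - move=> k; rewrite /z' /padd; case: ifP => [_|_ Hk]; [by rewrite eqxx | by rewrite Hzxy].
lra.
Qed.

Lemma submod p q : (forall k, 0 <= p k) -> (forall k, 0 <= q k) ->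
  V (fun k => Num.min (p k) (q k)) + V (fun k => Num.max (p k) (q k)) <= V p + V q.
Proof.
move=> Hp Hq.
pose x := fun k => Num.min (p k) (q k).
pose z := fun k => p k - Num.min (p k) (q k).
have Ex : padd x z = p by apply: funext => k; rewrite /padd /x /z; ring.
have Ey : padd q z = (fun k => Num.max (p k) (q k)).
  apply: funext => k; rewrite /padd /z; have := addr_min_max (p k) (q k); lra.
have h1 : forall k, 0 <= x k.
  by move=> k; rewrite /x; case: (minmax_cases (p k) (q k)) => -[-> _].
have h2 : forall k, x k <= q k.
  move=> k; rewrite /x; case: (minmax_cases (p k) (q k)) => -[-> [_ h]] //.
have h3 : forall k, 0 <= z k.
  move=> k; rewrite /z; case: (minmax_cases (p k) (q k)) => -[-> [_ h]]; lra.
have h4 : forall k, z k != 0 -> x k = q k.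
  move=> k; rewrite /z /x; case: (minmax_cases (p k) (q k)) => -[-> [_ h]] //.
  by rewrite subrr eqxx.
have := @mono_full _ x q z (erefl _) h1 h2 h3 h4.
rewrite Ex Ey /x; lra.
Qed.

Lemma V_demand p S : in_demand w p S -> V p = uf p S.
Proof.
move=> HS; have [H1 [T HT]] := VP p.
apply/eqP; rewrite eq_le H1 andbT HT; exact: HS.
Qed.

Lemma demand_lattice p q S : (forall k, 0 <= p k) -> (forall k, 0 <= q k) ->
  in_demand w p S -> in_demand w q S ->
  in_demand w (fun k => Num.min (p k) (q k)) S /\
  in_demand w (fun k => Num.max (p k) (q k)) S.
Proof.
move=> Hp Hq HSp HSq.
have Hsm := submod Hp Hq.
rewrite (V_demand HSp) (V_demand HSq) in Hsm.
have Epr : price (fun k => Num.min (p k) (q k)) S + price (fun k => Num.max (p k) (q k)) S =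
           price p S + price q S.
  rewrite -!priceD; apply: price_ext => k _; exact: addr_min_max.
have [Hm1 _] := VP (fun k => Num.min (p k) (q k)).
have [HM1 _] := VP (fun k => Num.max (p k) (q k)).
have h1 := Hm1 S; have h2 := HM1 S.
move: Hsm h1 h2; rewrite /uf => Hsm h1 h2.
split => T.
  have := Hm1 T; rewrite /uf; lra.
have := HM1 T; rewrite /uf; lra.
Qed.

End Sub.


Lemma wer_common A A' p q : walrasian_reserve r v A p -> walrasian_reserve r v A' q ->
  walrasian_reserve r v A q.
Proof.
move=> Hp Hq.
have [Hu0p Hup Ep] := wer_uw Hp.
have [Hu0q Huq Eq] := wer_uw Hq.
have HA : is_allocation A by case: Hp.
have HA' : is_allocation A' by case: Hq.
have W1 : Wel A' <= Wel A.
  rewrite -(obj_alloc HA') -Ep; apply: weak_duality => //; first exact: feas_alloc.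
  by case: Hp.
apply: (cs_wer (uu := uw A' q)) => //; first by case: Hq.
by rewrite Eq.
Qed.

Lemma wer_min_max (GS : forall b, gross_substitute (v b)) A p q :
  walrasian_reserve r v A p -> walrasian_reserve r v A q ->
  walrasian_reserve r v A (fun j => Num.min (p j) (q j)) /\
  walrasian_reserve r v A (fun j => Num.max (p j) (q j)).
Proof.
move=> [HA Hep Hpr Hup] [_ Heq Hqr Huq].
have Hp0 : forall k, 0 <= p k by move=> k; apply: le_trans (Hpr k).
have Hq0 : forall k, 0 <= q k by move=> k; apply: le_trans (Hqr k).
have Hd := fun b => demand_lattice (GS b) Hp0 Hq0 (Hep b) (Heq b).
split; split => //.
- by move=> b; case: (Hd b).
- by move=> j; have := Hpr j; have := Hqr j; case: (minmax_cases (p j) (q j)) => -[-> _].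
- by move=> j Hj; rewrite Hup // Huq // minxx.
- by move=> b; case: (Hd b).
- by move=> j; have := Hpr j; have := Hqr j; case: (minmax_cases (p j) (q j)) => -[_ [-> _]].
- by move=> j Hj; rewrite Hup // Huq // maxxx.
Qed.

Lemma wer_bound A p : walrasian_reserve r v A p -> forall j, p j <= r j + Mv.
Proof.
move=> [HA Hef Hpr Hun] j.
have HM := Mv_ge0; have := hr j.
case: (boolP (j \in allocated A)) => Hj; last by rewrite Hun //; lra.
move/finset.bigcupP: Hj => [b _ Hb].
have Hp0 : forall k, 0 <= p k by move=> k; apply: le_trans (Hpr k).
have := price_elem Hp0 Hb.
have := Hef b finset.set0; rewrite v0 price0.
have := Mv_ge b (A b); lra.
Qed.

Lemma price_const_le (e : R) (T : {set Omega}) : 0 <= e ->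
  price (fun _ => e) T <= (\sum_(j : Omega) 1) * e.
Proof.
move=> He; rewrite mulr_suml priceE; apply: ler_sum => j _.
by case: (j \in T); rewrite /= ?mul1r ?mul0r.
Qed.

Local Open Scope classical_set_scope.

Lemma wer_inf (GS : forall b, gross_substitute (v b)) (P : set (Omega -> R)) :
  P `<=` wer_prices r v -> P !=set0 ->
  wer_prices r v (fun j => inf [set p j | p in P]).
Proof.
move=> HP [p0 Hp0]; have [A0 HA0] := HP p0 Hp0.
have HPA : forall p, P p -> walrasian_reserve r v A0 p.
  by move=> p Hp; have [A HA] := HP p Hp; exact: wer_common HA0 HA.
set pi := fun j => inf [set p j | p in P].
have Hinf : forall j, has_inf [set p j | p in P].
  move=> j; split; first by exists (p0 j), p0.
  exists (r j) => x [p Hp <-]; by case: (HPA p Hp).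
have Hlow : forall p j, P p -> pi j <= p j.
  by move=> p j Hp; apply: (ge_inf (proj2 (Hinf j))); exists p.
have Hge : forall j, r j <= pi j.
  move=> j; apply: lb_le_inf; first by exists (p0 j), p0.
  move=> x [p Hp <-]; by case: (HPA p Hp).
have Happ : forall e, 0 < e -> forall n (X : {set Omega}), #|X| = n ->
    exists q, [/\ walrasian_reserve r v A0 q, forall j, pi j <= q j &
                  forall j, j \in X -> q j <= pi j + e].
  move=> e He; elim=> [|n IH] X HX.
    exists p0; split; first exact: (HPA p0 Hp0); first by move=> j; apply: Hlow.
    by move=> j; move/eqP: HX; rewrite cards_eq0 => /eqP ->; rewrite inE.
  have [j Hj] : exists j, j \in X by apply/set0Pn; rewrite -card_gt0 HX.
  have HX' : #|X :\ j| = n by move: HX; rewrite (cardsD1 j) Hj => -[].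
  have [q [Hq Hqlow Hqup]] := IH (X :\ j) HX'.
  have [x [pj Hpj <-] Hx] := inf_adherent He (Hinf j).
  have [Hmin _] := wer_min_max GS Hq (HPA pj Hpj).
  exists (fun k => Num.min (q k) (pj k)); split => //.
    move=> k; have := Hqlow k; have := Hlow pj k Hpj.
    by case: (minmax_cases (q k) (pj k)) => -[-> _].
  move=> k Hk; case: (eqVneq k j) => [->|Hkj].
    by case: (minmax_cases (q j) (pj j)) => -[-> [_ h]]; rewrite /pi; lra.
  have := Hqup k; rewrite in_setD1 Hkj Hk => /(_ isT).
  by case: (minmax_cases (q k) (pj k)) => -[-> [_ h]]; lra.
exists A0; case: HA0 => HA Hef Hpr Hun; split => //.
- move=> b T.
  apply: (@small_le _ _ (\sum_(j : Omega) 1)); first by apply: sumr_ge0.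
  move=> e He.
  have [q [[_ Hefq _ _] Hqlow Hqup]] := Happ e He _ [set: Omega]%SET (erefl _).
  have h1 := Hefq b T.
  have h2 : price pi (A0 b) <= price q (A0 b) by apply: price_le.
  have h3 : price q T <= price pi T + (\sum_(j : Omega) 1) * e.
    apply: (@le_trans _ _ (price (fun k => pi k + e) T)).
      by apply: price_le => k; apply: Hqup; rewrite inE.
    rewrite priceD lerD2l; apply: price_const_le; exact: ltW.
  lra.
- move=> j Hj; apply/eqP; rewrite eq_le Hge andbT.
  by rewrite -(Hun j Hj); apply: Hlow.
Qed.

Lemma wer_sup (GS : forall b, gross_substitute (v b)) (P : set (Omega -> R)) :
  P `<=` wer_prices r v -> P !=set0 ->
  wer_prices r v (fun j => sup [set p j | p in P]).
Proof.
move=> HP [p0 Hp0]; have [A0 HA0] := HP p0 Hp0.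
have HPA : forall p, P p -> walrasian_reserve r v A0 p.
  by move=> p Hp; have [A HA] := HP p Hp; exact: wer_common HA0 HA.
set pi := fun j => sup [set p j | p in P].
have Hsup : forall j, has_sup [set p j | p in P].
  move=> j; split; first by exists (p0 j), p0.
  exists (r j + Mv) => x [p Hp <-]; exact: (wer_bound (HPA p Hp)).
have Hup : forall p j, P p -> p j <= pi j.
  by move=> p j Hp; apply: (ub_le_sup (proj2 (Hsup j))); exists p.
have Hle : forall j, pi j <= r j + Mv.
  move=> j; apply: ge_sup; first by exists (p0 j), p0.
  move=> x [p Hp <-]; exact: (wer_bound (HPA p Hp)).
have Happ : forall e, 0 < e -> forall n (X : {set Omega}), #|X| = n ->
    exists q, [/\ walrasian_reserve r v A0 q, forall j, q j <= pi j &
                  forall j, j \in X -> pi j <= q j + e].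
  move=> e He; elim=> [|n IH] X HX.
    exists p0; split; first exact: (HPA p0 Hp0); first by move=> j; apply: Hup.
    by move=> j; move/eqP: HX; rewrite cards_eq0 => /eqP ->; rewrite inE.
  have [j Hj] : exists j, j \in X by apply/set0Pn; rewrite -card_gt0 HX.
  have HX' : #|X :\ j| = n by move: HX; rewrite (cardsD1 j) Hj => -[].
  have [q [Hq Hqup Hqlow]] := IH (X :\ j) HX'.
  have [x [pj Hpj <-] Hx] := sup_adherent He (Hsup j).
  have [_ Hmax] := wer_min_max GS Hq (HPA pj Hpj).
  exists (fun k => Num.max (q k) (pj k)); split => //.
    move=> k; have := Hqup k; have := Hup pj k Hpj.
    by case: (minmax_cases (q k) (pj k)) => -[_ [-> _]].
  move=> k Hk; case: (eqVneq k j) => [->|Hkj].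
    by case: (minmax_cases (q j) (pj j)) => -[_ [-> h]]; rewrite /pi; lra.
  have := Hqlow k; rewrite in_setD1 Hkj Hk => /(_ isT).
  by case: (minmax_cases (q k) (pj k)) => -[_ [-> h]]; lra.
exists A0; case: HA0 => HA Hef Hpr Hun; split => //.
- move=> b T.
  apply: (@small_le _ _ (\sum_(j : Omega) 1)); first by apply: sumr_ge0.
  move=> e He.
  have [q [[_ Hefq _ _] Hqup Hqlow]] := Happ e He _ [set: Omega]%SET (erefl _).
  have h1 := Hefq b T.
  have h2 : price q T <= price pi T by apply: price_le.
  have h3 : price pi (A0 b) <= price q (A0 b) + (\sum_(j : Omega) 1) * e.
    apply: (@le_trans _ _ (price (fun k => q k + e) (A0 b))).
      by apply: price_le => k; apply: Hqlow; rewrite inE.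
    rewrite priceD lerD2l; apply: price_const_le; exact: ltW.
  lra.
- move=> j; apply: le_trans (Hpr j) (Hup _ _ Hp0).
- move=> j Hj; apply/eqP; rewrite eq_le andbC -{1}(Hun j Hj) Hup //=.
  apply: ge_sup; first by exists (p0 j), p0.
  move=> x [p Hp <-]; by case: (HPA p Hp) => _ _ _ H; rewrite H.
Qed.

End Econ.

Unset Implicit Arguments.
Local Open Scope classical_set_scope.

Theorem theorem4 (R : realType) (Omega B : finType)
  (v : B -> {set Omega} -> R) (r : Omega -> R)
  (hv : forall b, valuation (v b)) (hr : forall j, 0 <= r j) :
  (* (a1) *)
  ((forall (A : B -> {set Omega}) (p : Omega -> R),
      walrasian_reserve r v A p -> walrasian (ext_val r v) (ext_alloc A) p) /\
   (forall (A : B -> {set Omega}) (p' : Omega -> R),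
      walrasian (ext_val r v) (ext_alloc A) p' ->
      walrasian_reserve r v A (restrict_prices r A p'))) /\
  (* (a2) *)
  (forall A : B -> {set Omega}, is_allocation A ->
      (exists p, walrasian_reserve r v A p) <->
      (integral (alloc_vector (R:=R) A) /\
       lp_optimal r v (alloc_vector A))) /\
  (* (b) *)
  ((forall b, gross_substitute (v b)) ->
     (exists A p, walrasian_reserve r v A p) /\
     (forall p q, wer_prices r v p -> wer_prices r v q ->
        wer_prices r v (fun j => Num.min (p j) (q j)) /\
        wer_prices r v (fun j => Num.max (p j) (q j))) /\
     (forall P : set (Omega -> R), P `<=` wer_prices r v -> P !=set0 ->
        wer_prices r v (fun j => inf [set p j | p in P]) /\
        wer_prices r v (fun j => sup [set p j | p in P]))).
Proof.
split; first split.
- by move=> A p H; apply: (a1_fwd hr H).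
- by move=> A p H; apply: a1_bwd.
split; first by move=> A HA; apply: (a2_equiv r hv HA).
move=> GS; split; first exact: (exists_wer hv hr GS).
split.
- move=> p q [A HA] [A' HA'].
  have HqA := wer_common hv HA HA'.
  have [H1 H2] := wer_min_max hr GS HA HqA.
  by split; [exists A | exists A].
- move=> P HP HP0; split; [exact: (wer_inf hv hr GS HP HP0) | exact: (wer_sup hv hr GS HP HP0)].
Qed.
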